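(* Let $S_{r,N}$ be a nontrivial atomic exponential Puiseux semiring. Then for every $k\in\mathbb{N}$ and every positive integer $n$, $r^{s_k}$ does not divide $\sum_{i=1}^{n}r^{s_{k+i}}$ in $S_{r,N}$. Consequently, $S_{r,N}$ is not strongly primary.
   Context: $\mathbb{N}=\{0,1,2,\dots\}$. A numerical monoid $N$ is an additive submonoid of $\mathbb{N}$ with finite complement; let $s_0<s_1<\cdots$ be its elements. For $r\in\mathbb{Q}_{>0}$ write $r=\mathsf{n}(r)/\mathsf{d}(r)$ in lowest terms. $S_{r,N}$ is the additive submonoid of $\mathbb{Q}_{\ge0}$ generated by $\{r^k:k\in N\}$; nontrivial means $r\notin\mathbb{N}$, and then it is atomic iff $\mathsf{n}(r)>1$. In a monoid $M$, $y\mid_M w$ means $w-y\in M$. A (commutative, cancellative) monoid $M$ with group of units $M^\times$ is strongly primary if $M\neq M^\times$ and for every $x\in M\setminus M^\times$ there exists $n\in\mathbb{N}$ such that every sum of $n$ elements of $M\setminus M^\times$ is divisible by $x$ (i.e., $(M\setminus M^\times)^n\subseteq x+M$ in additive notation). *)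

(* Defs.v *)
From mathcomp Require Import all_boot all_order all_algebra.
Set Implicit Arguments. Unset Strict Implicit. Unset Printing Implicit Defensive.
Import Order.TTheory GRing.Theory Num.Theory.
Local Open Scope ring_scope.

Definition numerical_monoid (N : nat -> Prop) : Prop :=
  [/\ N 0%N, (forall a b, N a -> N b -> N (a + b)%N)
    & exists b : nat, forall n, (b <= n)%N -> N n].

Definition enumerates (N : nat -> Prop) (s : nat -> nat) : Prop :=
  (forall k, (s k < s k.+1)%N) /\ (forall x, N x <-> exists k, s k = x).

(* S_{r,N}: the additive submonoid of Q_{>=0} generated by {r^k : k in N}. *)
Inductive in_SrN (r : rat) (N : nat -> Prop) : rat -> Prop :=
  | SrN0 : in_SrN r N 0
  | SrN_add k x : N k -> in_SrN r N x -> in_SrN r N (r ^+ k + x).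

Definition is_unit (M : rat -> Prop) (x : rat) : Prop := M x /\ M (- x).

Definition mdivides (M : rat -> Prop) (y w : rat) : Prop := M (w - y).

Definition is_atom (M : rat -> Prop) (x : rat) : Prop :=
  [/\ M x, ~ is_unit M x &
     forall y z, M y -> M z -> x = y + z -> is_unit M y \/ is_unit M z].

Definition atomic (M : rat -> Prop) : Prop :=
  forall x, M x -> ~ is_unit M x ->
    exists s : seq rat, (forall a, a \in s -> is_atom M a) /\ x = \sum_(a <- s) a.

Definition strongly_primary (M : rat -> Prop) : Prop :=
  (exists x, M x /\ ~ is_unit M x) /\
  forall x, M x -> ~ is_unit M x ->
    exists n : nat, forall a : nat -> rat,
      (forall i, (i < n)%N -> M (a i) /\ ~ is_unit M (a i)) ->
      mdivides M x (\sum_(i < n) a i).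

(* Main.v *)
Require Import Defs.
From mathcomp Require Import all_boot all_order all_algebra zify ring lra.
Import Order.TTheory GRing.Theory Num.Theory.
Local Open Scope ring_scope.

Lemma inS_sum r N x : in_SrN r N x -> exists R : seq nat, x = \sum_(t <- R) r ^+ t.
Proof.
elim=> [|k y _ _ [R ->]]; first by exists [::]; rewrite big_nil.
by exists (k :: R); rewrite big_cons.
Qed.

Lemma inS_ge0 r N x : 0 <= r -> in_SrN r N x -> 0 <= x.
Proof.
move=> hr /inS_sum [R ->]; apply: sumr_ge0 => t _; exact: exprn_ge0.
Qed.

Lemma sum_count (r : rat) M (l : seq nat) : all (fun t => t <= M)%N l ->
  \sum_(t <- l) r ^+ t = \sum_(e < M.+1) (count_mem (e : nat) l)%:R * r ^+ e.
Proof.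
elim: l => [|x l IH] /=.
  by rewrite big_nil big1 // => e _; rewrite mul0r.
move=> /andP [hx hl]; rewrite big_cons IH //.
under [in RHS]eq_bigr => e _ do rewrite natrD mulrDl.
rewrite big_split /=; congr (_ + _).
have hx' : (x < M.+1)%N by [].
rewrite (bigD1 (Ordinal hx')) //= eqxx mul1r big1 ?addr0 // => e he.
have -> : (x == e :> nat) = false.
  apply/negbTE; apply: contra he => /eqP hxe; apply/eqP; apply: val_inj => /=.
  by rewrite hxe.
by rewrite mul0r.
Qed.

Lemma conv (a b : int) (p : nat -> int) M : b != 0 ->
  \sum_(e < M.+1) (p e)%:~R * ((a%:~R / b%:~R : rat) ^+ e) = 0 ->
  \sum_(e < M.+1) p e * a ^+ e * b ^+ (M - e) = 0.
Proof.
move=> hb E; apply/eqP; rewrite -(intr_eq0 rat) rmorph_sum /=.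
have -> : \sum_(i < M.+1) ((p i * a ^+ i * b ^+ (M - i))%:~R : rat)
   = (b%:~R ^+ M) * \sum_(e < M.+1) (p e)%:~R * ((a%:~R / b%:~R : rat) ^+ e).
  rewrite mulr_sumr; apply: eq_bigr => i _.
  have hi : (i <= M)%N by rewrite -ltnS.
  rewrite !rmorphM !rmorphXn /= expr_div_n.
  have -> : (b%:~R : rat) ^+ M = b%:~R ^+ (M - i) * b%:~R ^+ i by rewrite -exprD subnK.
  have hb' : (b%:~R : rat) ^+ i != 0 by rewrite expf_neq0 // intr_eq0.
  by field.
by rewrite E mulr0.
Qed.

Lemma geo (r : rat) : 0 <= r -> 2 * r <= 1 -> forall n,
  \sum_(1 <= i < n.+1) r ^+ i <= 1 - r ^+ n.
Proof.
move=> h0 h1; elim=> [|n IH]; first by rewrite big_geq // expr0 subrr.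
rewrite big_nat_recr //=.
have h2 : 0 <= r ^+ n by apply: exprn_ge0.
have : r ^+ n.+1 = r * r ^+ n by rewrite exprS.
move=> ->; nra.
Qed.
Lemma L1 (p c a : int) : 2 <= a -> p <= 1 -> c <= 0 -> p + c * a = 0 -> c = 0 /\ p = 0.
Proof. move=> ha hp hc E.
have [c0|cn] := eqVneq c 0. split=> //. move: E; rewrite c0 mul0r addr0 //.
have h1 : c + 1 <= 0 by lia.
have h2 : (c + 1) * a <= 0 by rewrite mulr_le0_ge0 //; lia.
lia. Qed.
Lemma L2 (p c a b c' : int) : 2 <= a -> 2 <= b -> p <= 1 -> c <= 0 -> p + c * a = c' * b -> c' <= 0.
Proof. move=> ha hb hp hc E.
have h2 : c * a <= 0 by rewrite mulr_le0_ge0 //; lia.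
have : c' * b <= 1 by lia.
case: (lerP c' 0) => // hc'.
have : 1 * b <= c' * b by rewrite ler_pM2r; lia.
lia. Qed.

Lemma G (a b : int) (ha : 2 <= a) (hb : 2 <= b) (cop : coprimez b a) :
  forall M (p : nat -> int) (c : int), c <= 0 ->
  (forall e, (e <= M)%N -> p e <= 1) ->
  \sum_(e < M.+1) p e * a ^+ e * b ^+ (M - e) + c * a ^+ M.+1 = 0 ->
  c = 0 /\ forall e, (e <= M)%N -> p e = 0.
Proof.
elim=> [|M IH] p c hc hp.
  rewrite big_ord1 /= !expr0 expr1 mulr1 mulr1 => E.
  have [c0 p0] := @L1 _ _ _ ha (hp 0%N (leqnn _)) hc E.
  by split=> // e; rewrite leqn0 => /eqP ->.
rewrite big_ord_recr /= subnn expr0 mulr1.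
have -> : \sum_(i < M.+1) p (widen_ord (leqnSn M.+1) i) * a ^+ i * b ^+ (M.+1 - i)
   = b * \sum_(e < M.+1) p e * a ^+ e * b ^+ (M - e).
  rewrite mulr_sumr; apply: eq_bigr => i _ /=.
  have hi : (i <= M)%N by rewrite -ltnS.
  by rewrite subSn // exprS mulrCA mulrA.
set X := \sum_(e < M.+1) _ => E.
set v := p M.+1 + c * a.
have Ev : v * a ^+ M.+1 + b * X = 0 by rewrite -E /v !exprS; ring.
have : (b %| v * a ^+ M.+1)%Z.
  have -> : v * a ^+ M.+1 = b * (- X) by rewrite mulrN; apply/eqP; rewrite -addr_eq0 Ev.
  by rewrite dvdz_mulr // dvdzz.
rewrite Gauss_dvdzl ?coprimezXr // => /dvdzP [c' Ec'].
have hpM := hp M.+1 (leqnn _).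
have hc' : c' <= 0 by apply: (@L2 _ _ _ _ _ ha hb hpM hc Ec').
have E' : X + c' * a ^+ M.+1 = 0.
  have : b * (X + c' * a ^+ M.+1) = 0.
    by rewrite mulrDr -Ev Ec' /v; ring.
  move/eqP; rewrite mulf_eq0 => /orP [/eqP hb0|/eqP //].
  by move: hb; rewrite hb0.
have [c'0 hpe] := IH p c' hc' (fun e he => hp e (leqW he)) E'.
have v0 : p M.+1 + c * a = 0 by rewrite -/v Ec' c'0 mul0r.
have [c0 p0] := @L1 _ _ _ ha hpM hc v0.
split=> // e; rewrite leq_eqVlt => /orP [/eqP ->|he] //.
by apply: hpe.
Qed.

Lemma mem_sumn (x : nat) l : x \in l -> (x <= sumn l)%N.
Proof.
elim: l => [|y l IH] //=; rewrite in_cons => /orP [/eqP ->|h].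
  exact: leq_addr.
by rewrite (leq_trans (IH h)) // leq_addl.
Qed.

Lemma part1 (r : rat) (N : nat -> Prop) (s : nat -> nat) :
  0 < r -> ~ (exists m : nat, r = m%:R) -> (forall k, (s k < s k.+1)%N) ->
  forall k n : nat, (0 < n)%N ->
     ~ mdivides (in_SrN r N) (r ^+ s k)
         (\sum_(1 <= i < n.+1) r ^+ s (k + i)%N).
Proof.
move=> hr0 hnint hs k n hn; rewrite /mdivides => /inS_sum [R E].
have smono : forall i j, (i < j)%N -> (s i < s j)%N := homo_ltn ltn_trans hs.
set a := numq r; set b := denq r.
have hr : r = a%:~R / b%:~R by rewrite divq_num_den.
have ha : 0 < a by rewrite numq_gt0.
have hb0 : 0 < b by apply: denq_gt0.
have hb : 2 <= b.
  have [b1|bn1] := eqVneq b 1; last by lia.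
  exfalso; apply: hnint; exists `|a|%N.
  rewrite hr b1 divr1.
  have -> : a = (`|a|%N)%:Z by rewrite abszE gtr0_norm.
  by [].
have [a1|a2] : a = 1 \/ 2 <= a by lia.
  have hrb : r * b%:~R = 1 by rewrite hr a1 mul1r mulVf // intr_eq0; lia.
  have hb2 : (2 : rat) <= b%:~R by rewrite (ler_int _ 2 b).
  have h2r : 2 * r <= 1 by nra.
  have hr1 : r <= 1 by nra.
  have shift : forall i, (s k + i <= s (k + i))%N.
    elim=> [|i IH]; first by rewrite !addn0.
    rewrite addnS addnS; exact: leq_ltn_trans IH (hs _).
  have H1 : \sum_(1 <= i < n.+1) r ^+ s (k + i)%N <= r ^+ s k * (1 - r ^+ n).
    apply: le_trans (_ : \sum_(1 <= i < n.+1) r ^+ (s k + i) <= _).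
      apply: ler_sum => i _; apply: (ler_wiXn2l (ltW hr0) hr1); apply: shift.
    under eq_bigr => i _ do rewrite exprD.
    rewrite -mulr_sumr; apply: ler_wpM2l; first exact: exprn_ge0 (ltW hr0).
    apply: geo => //; exact: ltW.
  have H2 : 0 <= \sum_(t <- R) r ^+ t by apply: sumr_ge0 => t _; apply: exprn_ge0; exact: ltW.
  have H3 : 0 < r ^+ s k * r ^+ n by apply: mulr_gt0; apply: exprn_gt0.
  move: H2; rewrite -E; nra.
have cop : coprimez b a.
  by rewrite /coprimez /gcdz gcdnC; exact: coprime_num_den.
set L := [seq s (k + i)%N | i <- iota 1 n].
set R' := s k :: R.
have EL : \sum_(1 <= i < n.+1) r ^+ s (k + i)%N = \sum_(t <- L) r ^+ t.
  by rewrite big_map /index_iota subSS subn0.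
have Eq : \sum_(t <- L) r ^+ t = \sum_(t <- R') r ^+ t.
  by rewrite big_cons -EL -E addrC subrK.
set M := sumn (L ++ R').
have allM : all (fun t => t <= M)%N (L ++ R').
  by apply/allP => t ht; apply: mem_sumn.
move: allM; rewrite all_cat => /andP [allL allR].
rewrite (@sum_count r M L allL) (@sum_count r M R' allR) in Eq.
set p := fun e : nat => (count_mem e L)%:Z - (count_mem e R')%:Z.
have E0 : \sum_(e < M.+1) (p e)%:~R * ((a%:~R / b%:~R : rat) ^+ e) = 0.
  rewrite -hr.
  under eq_bigr => e _ do rewrite /p intrB mulrBl.
  by rewrite sumrB Eq subrr.
have E1 := @conv a b p M (lt0r_neq0 hb0) E0.
have sinj : injective s.
  move=> i j hij; case: (ltngtP i j) => // h.
    by have := smono _ _ h; rewrite hij ltnn.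
  by have := smono _ _ h; rewrite hij ltnn.
have uL : uniq L.
  rewrite map_inj_uniq ?iota_uniq // => i j /sinj; exact: addnI.
have hp : forall e, (e <= M)%N -> p e <= 1.
  move=> e _; rewrite /p count_uniq_mem //.
  have : ((e \in L) <= 1)%N by apply: leq_b1.
  lia.
have skL : (s k \in L) = false.
  apply/negbTE/negP => /mapP [i]; rewrite mem_iota => /andP [hi _] hski.
  have := smono k (k + i)%N; rewrite -hski ltnn => h.
  have : (k < k + i)%N by rewrite -{1}(addn0 k) ltn_add2l.
  by move/h.
have skM : (s k <= M)%N by apply/(allP allR); rewrite /R' mem_head.
have E2 : \sum_(e < M.+1) p e * a ^+ e * b ^+ (M - e) + 0 * a ^+ M.+1 = 0.
  by rewrite mul0r addr0.
have [_ hp0] := @G a b a2 hb cop M p 0 (lexx 0) hp E2.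
have := hp0 _ skM; rewrite /p count_uniq_mem // skL /= eqxx.
lia.
Qed.

Theorem mainTheorem17 (r : rat) (N : nat -> Prop) (s : nat -> nat) :
  0 < r ->
  ~ (exists m : nat, r = m%:R) ->
  numerical_monoid N ->
  enumerates N s ->
  atomic (in_SrN r N) ->
  (forall k n : nat, (0 < n)%N ->
     ~ mdivides (in_SrN r N) (r ^+ s k)
         (\sum_(1 <= i < n.+1) r ^+ s (k + i)%N))
  /\ ~ strongly_primary (in_SrN r N).
Proof.
move=> hr0 hnint _ [hs hN] _.
have P1 := @part1 r N s hr0 hnint hs.
split=> //; case=> _ hsp.
have memS : forall j, in_SrN r N (r ^+ s j).
  move=> j; have hNj : N (s j) by apply/hN; exists j.
  by have := SrN_add hNj (SrN0 r N); rewrite addr0.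
have nonunit : forall e, ~ is_unit (in_SrN r N) (r ^+ e).
  move=> e [_ h]; have := @inS_ge0 r N _ (ltW hr0) h.
  by rewrite oppr_ge0 leNgt exprn_gt0.
have [n hn] := hsp _ (memS 0%N) (nonunit _).
have := hn (fun i => r ^+ s i.+1) (fun i _ => conj (memS _) (nonunit _)).
case: n {hn} => [|n].
  rewrite big_ord0 /mdivides sub0r => h.
  by have := @inS_ge0 r N _ (ltW hr0) h; rewrite oppr_ge0 leNgt exprn_gt0.
have -> : \sum_(i < n.+1) r ^+ s i.+1 = \sum_(1 <= i < n.+2) r ^+ s (0 + i)%N.
  by rewrite big_add1 /= big_mkord.
exact: P1.
Qed.
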